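(* Let $f_1,\dots,f_n$ satisfy Assumptions A1, A2 and $f_0$ satisfy Assumption A3. Then $(\hat x,\hat\beta)\in\mathbb{R}^d\times\Delta^{n-1}$ is $(\epsilon_0,\epsilon)$-preference stationary if $\|\nabla f_{\hat\beta}(\hat x)\|_2\le\epsilon$ and, for some $x\in\mathbb{R}^d$ and $\alpha\in(0,1)$: (1) $-\nabla f_0(x)^\top\widehat{\nabla}x^*(x,\hat\beta)(\beta'-\hat\beta)\le\alpha\cdot\epsilon_0\|\beta'-\hat\beta\|_1$ for all $\beta'\in\Delta^{n-1}$; and (2) $\mathrm{err}_{\nabla f_0}(x,\hat\beta)\le(1-\alpha)\cdot\epsilon_0$.
   Context: Assumption A1: each $f_i:\mathbb{R}^d\to\mathbb{R}$ is twice differentiable with $\mu\mathbf{I}\preceq\nabla^2 f_i\preceq L\mathbf{I}$, $0<\mu\le L$, $\kappa:=L/\mu$. Assumption A2: each $\nabla^2 f_i$ is $L_H$-Lipschitz. Assumption A3: $f_0:\mathbb{R}^d\to\mathbb{R}$ has $L_0$-Lipschitz gradient. $F=(f_1,\dots,f_n)$, $\nabla F(x)\in\mathbb{R}^{n\times d}$ its Jacobian, $f_\beta=\sum_i\beta_if_i$ for $\beta\in\Delta^{n-1}$ (simplex), $x^*(\beta)=x_\beta=\operatorname{argmin}_xf_\beta(x)$, $\nabla x^*(\beta)=-\nabla^2f_\beta(x_\beta)^{-1}\nabla F(x_\beta)^\top$, $\widehat{\nabla}x^*(x,\beta):=-\nabla^2f_\beta(x)^{-1}\nabla F(x)^\top$.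 $R$ is the $\ell_2$-diameter of the Pareto set of $F$, $M_0:=\kappa R$, $M_1:=2\kappa^2R(1+L_HR/\mu)$, and $\mathrm{err}_{\nabla f_0}(x,\beta):=\frac{1}{\mu}\big(\frac{M_1}{2M_0}\|\nabla f_0(x)\|_2+L_0M_0\big)\|\nabla f_\beta(x)\|_2$. A point $(x,\beta)$ is $(\epsilon_0,\epsilon)$-preference stationary if $-\nabla f_0(x_\beta)^\top\nabla x^*(\beta)(\beta'-\beta)\le\epsilon_0\|\beta'-\beta\|_1$ for all $\beta'\in\Delta^{n-1}$ and $\|\nabla f_\beta(x)\|_2\le\epsilon$. *)

(* Defs.v *)
From HB Require Import structures.
From mathcomp Require Import all_boot all_order all_algebra.
From mathcomp Require Import all_classical all_reals all_analysis.
Set Implicit Arguments. Unset Strict Implicit. Unset Printing Implicit Defensive.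
Import Order.TTheory GRing.Theory Num.Theory.
Import numFieldNormedType.Exports.
Local Open Scope classical_set_scope.
Local Open Scope ring_scope.

Section Defs.
Variable R : realType.

Definition dotv (d : nat) (u v : 'cV[R]_d) : R := \sum_(j < d) u j 0 * v j 0.
Definition norm2 (d : nat) (u : 'cV[R]_d) : R := Num.sqrt (dotv u u).
Definition norm1 (d : nat) (u : 'cV[R]_d) : R := \sum_(j < d) `|u j 0|.

Definition simplex (n : nat) : set 'cV[R]_n :=
  [set b | (forall i, 0 <= b i 0) /\ \sum_(i < n) b i 0 = 1].

Definition is_gradient (d : nat) (f : 'cV[R]_d -> R) (g : 'cV[R]_d -> 'cV[R]_d) :=
  forall x, differentiable f x /\ forall v, 'd f x v = dotv (g x) v.

Definition is_jacobian (d : nat) (g : 'cV[R]_d -> 'cV[R]_d) (H : 'cV[R]_d -> 'M[R]_d) :=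
  forall x, differentiable g x /\ forall v, 'd g x v = H x *m v.

Definition loewner_between (d : nat) (mu L : R) (A : 'M[R]_d) :=
  forall v : 'cV[R]_d, mu * dotv v v <= dotv v (A *m v) /\ dotv v (A *m v) <= L * dotv v v.

(* Lipschitz continuity of a matrix valued map w.r.t. the spectral (l2 operator) norm *)
Definition mx_lipschitz (d : nat) (LH : R) (H : 'cV[R]_d -> 'M[R]_d) :=
  forall x y (v : 'cV[R]_d), norm2 ((H x - H y) *m v) <= LH * norm2 (x - y) * norm2 v.

Definition vec_lipschitz (d : nat) (L0 : R) (g : 'cV[R]_d -> 'cV[R]_d) :=
  forall x y, norm2 (g x - g y) <= L0 * norm2 (x - y).

Variables (n d : nat) (F : 'I_n -> 'cV[R]_d -> R)
  (gF : 'I_n -> 'cV[R]_d -> 'cV[R]_d) (HF : 'I_n -> 'cV[R]_d -> 'M[R]_d).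

Definition fbeta (b : 'cV[R]_n) (x : 'cV[R]_d) : R := \sum_(i < n) b i 0 * F i x.
Definition grad_fbeta (b : 'cV[R]_n) (x : 'cV[R]_d) : 'cV[R]_d := \sum_(i < n) b i 0 *: gF i x.
Definition hess_fbeta (b : 'cV[R]_n) (x : 'cV[R]_d) : 'M[R]_d := \sum_(i < n) b i 0 *: HF i x.

Definition jacF (x : 'cV[R]_d) : 'M[R]_(n, d) := \matrix_(i < n, j < d) gF i x j 0.

(* x^*(beta) = argmin_x f_beta(x) (chosen by choice; unique under A1) *)
Definition xstar (b : 'cV[R]_n) : 'cV[R]_d :=
  xget 0 [set x | forall y, fbeta b x <= fbeta b y].

Definition hat_dxstar (x : 'cV[R]_d) (b : 'cV[R]_n) : 'M[R]_(d, n) :=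
  - (invmx (hess_fbeta b x) *m (jacF x)^T).

Definition dxstar (b : 'cV[R]_n) : 'M[R]_(d, n) := hat_dxstar (xstar b) b.

Definition pareto_set : set 'cV[R]_d :=
  [set x | ~ exists y, (forall i, F i y <= F i x) /\ (exists i, F i y < F i x)].

Definition l2_diam (A : set 'cV[R]_d) : R :=
  sup [set norm2 (x - y) | x in A & y in A].

Definition pref_stationary (g0 : 'cV[R]_d -> 'cV[R]_d) (eps0 eps : R)
    (x : 'cV[R]_d) (b : 'cV[R]_n) :=
  (forall b', simplex b' ->
     - ((g0 (xstar b))^T *m dxstar b *m (b' - b)) 0 0 <= eps0 * norm1 (b' - b))
  /\ norm2 (grad_fbeta b x) <= eps.

Definition err_grad_f0 (mu L LH L0 : R) (g0 : 'cV[R]_d -> 'cV[R]_d)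
    (x : 'cV[R]_d) (b : 'cV[R]_n) : R :=
  let kappa := L / mu in
  let Rd := l2_diam pareto_set in
  let M0 := kappa * Rd in
  let M1 := 2 * kappa ^+ 2 * Rd * (1 + LH * Rd / mu) in
  mu^-1 * (M1 / (2 * M0) * norm2 (g0 x) + L0 * M0) * norm2 (grad_fbeta b x).

End Defs.

(* Main.v *)
Require Import Defs.
From HB Require Import structures.
From mathcomp Require Import all_boot all_order all_algebra.
From mathcomp Require Import all_classical all_reals all_analysis.
From mathcomp Require Import ring lra.
Import Order.TTheory GRing.Theory Num.Theory.
Import numFieldNormedType.Exports.
Local Open Scope classical_set_scope.
Local Open Scope ring_scope.

Set Implicit Arguments. Unset Strict Implicit.

Section Vec.
Variables (R : realType) (d : nat).
Implicit Types (u v w : 'cV[R]_d).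

Lemma dotvC u v : dotv u v = dotv v u.
Proof. by apply: eq_bigr => j _; rewrite mulrC. Qed.

Lemma dotvDl u v w : dotv (u + v) w = dotv u w + dotv v w.
Proof. by rewrite /dotv -big_split; apply: eq_bigr => j _; rewrite mxE mulrDl. Qed.

Lemma dotvDr u v w : dotv w (u + v) = dotv w u + dotv w v.
Proof. by rewrite dotvC dotvDl !(dotvC w). Qed.

Lemma dotvZl (a : R) u v : dotv (a *: u) v = a * dotv u v.
Proof. by rewrite /dotv mulr_sumr; apply: eq_bigr => j _; rewrite mxE mulrA. Qed.

Lemma dotvZr (a : R) u v : dotv v (a *: u) = a * dotv v u.
Proof. by rewrite dotvC dotvZl dotvC. Qed.

Lemma dotvNl u v : dotv (- u) v = - dotv u v.
Proof. by rewrite -scaleN1r dotvZl mulN1r. Qed.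

Lemma dotvNr u v : dotv v (- u) = - dotv v u.
Proof. by rewrite dotvC dotvNl dotvC. Qed.

Lemma dotvBl u v w : dotv (u - v) w = dotv u w - dotv v w.
Proof. by rewrite dotvDl dotvNl. Qed.

Lemma dotvBr u v w : dotv w (u - v) = dotv w u - dotv w v.
Proof. by rewrite dotvDr dotvNr. Qed.

Lemma dotv0l v : dotv 0 v = 0.
Proof. by rewrite /dotv big1 // => j _; rewrite mxE mul0r. Qed.

Lemma dotv0r v : dotv v 0 = 0.
Proof. by rewrite dotvC dotv0l. Qed.

Lemma dotv_sumr (I : finType) (F : I -> 'cV[R]_d) v :
  dotv v (\sum_i F i) = \sum_i dotv v (F i).
Proof.
apply: (big_ind2 (fun a b => dotv v a = b)) => //.
  by rewrite dotv0r.
by move=> a1 a2 b1 b2 <- <-; rewrite dotvDr.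
Qed.

Lemma dotv_ge0 u : 0 <= dotv u u.
Proof. by apply: sumr_ge0 => j _; rewrite -expr2 sqr_ge0. Qed.

Lemma dotv_eq0 u : dotv u u = 0 -> u = 0.
Proof.
move=> /eqP; rewrite psumr_eq0 => [/allP H|j _]; last by rewrite -expr2 sqr_ge0.
apply/matrixP => i j; rewrite mxE; have := H i (mem_index_enum _).
by rewrite ord1 -expr2 sqrf_eq0 => /eqP.
Qed.

Lemma norm2_ge0 u : 0 <= norm2 u.
Proof. exact: sqrtr_ge0. Qed.

Lemma norm2_sq u : norm2 u ^+ 2 = dotv u u.
Proof. by rewrite /norm2 sqr_sqrtr // dotv_ge0. Qed.

Lemma norm2_eq0 u : norm2 u = 0 -> u = 0.
Proof. by move=> H; apply: dotv_eq0; rewrite -norm2_sq H expr0n. Qed.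

Lemma norm2_0 : norm2 (0 : 'cV[R]_d) = 0.
Proof. by rewrite /norm2 dotv0l sqrtr0. Qed.

Lemma norm2Z (a : R) u : norm2 (a *: u) = `|a| * norm2 u.
Proof.
by rewrite /norm2 dotvZl dotvZr mulrA -expr2 sqrtrM ?sqr_ge0 // sqrtr_sqr.
Qed.

Lemma norm2N u : norm2 (- u) = norm2 u.
Proof. by rewrite -scaleN1r norm2Z normrN normr1 mul1r. Qed.

Lemma norm2B u v : norm2 (u - v) = norm2 (v - u).
Proof. by rewrite -norm2N opprB. Qed.

Lemma CS u v : `|dotv u v| <= norm2 u * norm2 v.
Proof.
have key : dotv u v ^+ 2 <= dotv u u * dotv v v.
  have [v0|vn0] := eqVneq (dotv v v) 0.
    by rewrite (dotv_eq0 v0) dotv0r dotv0l expr0n mulr0.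
  have vp : 0 < dotv v v by rewrite lt0r vn0 dotv_ge0.
  set t := dotv u v / dotv v v.
  have := dotv_ge0 (u - t *: v).
  rewrite !dotvBl !dotvBr !dotvZl !dotvZr (dotvC v u) /t.
  move=> H; have : 0 <= dotv v v * (dotv u u - dotv u v / dotv v v * dotv u v -
      (dotv u v / dotv v v * dotv u v -
       dotv u v / dotv v v * (dotv u v / dotv v v * dotv v v))).
    by apply: mulr_ge0 => //; exact: ltW.
  set a := dotv u u; set b := dotv u v; set c := dotv v v.
  have -> : c * (a - b / c * b - (b / c * b - b / c * (b / c * c))) =
            c * a - b ^+ 2.
    by field; rewrite gt_eqF.
  by rewrite subr_ge0 mulrC.
rewrite -sqrtr_sqr /norm2 -sqrtrM ?dotv_ge0 //.
by rewrite ler_sqrt // mulr_ge0 // dotv_ge0.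
Qed.

Lemma CS' u v : dotv u v <= norm2 u * norm2 v.
Proof. exact: le_trans (ler_norm _) (CS u v). Qed.

Lemma norm2D u v : norm2 (u + v) <= norm2 u + norm2 v.
Proof.
have H2 : norm2 (u + v) ^+ 2 <= (norm2 u + norm2 v) ^+ 2.
  rewrite sqrrD !norm2_sq !dotvDl !dotvDr (dotvC v u).
  have := CS' u v; lra.
have := norm2_ge0 (u + v); have := norm2_ge0 u; have := norm2_ge0 v.
nra.
Qed.

Lemma norm2_sum (I : finType) (P : pred I) (F : I -> 'cV[R]_d) :
  norm2 (\sum_(i | P i) F i) <= \sum_(i | P i) norm2 (F i).
Proof.
apply: (big_ind2 (fun a b => norm2 a <= b)).
- by rewrite norm2_0.
- by move=> a1 a2 b1 b2 H1 H2; apply: le_trans (norm2D _ _) _; exact: lerD.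
- by [].
Qed.

End Vec.
Section OneD.
Variable R : realType.

Lemma mono_deriv (k dk : R -> R) (a b : R) :
  (forall t : R, is_derive t (1:R) k (dk t)) ->
  (forall t, a < t < b -> 0 <= dk t) -> a <= b -> k a <= k b.
Proof.
move=> Hd Hpos; rewrite le_eqVlt => /predU1P[->//|ab].
have cont : {within `[a, b], continuous k}.
  apply: derivable_within_continuous => x _.
  by have [] := Hd x.
have [c cab E] := MVT ab (fun x _ => Hd x) cont.
rewrite -subr_ge0 E; apply: mulr_ge0; last by rewrite subr_ge0 ltW.
by apply: Hpos; move: cab; rewrite in_itv /=.
Qed.

Lemma taylor_lb (p p1 p2 : R -> R) (a : R) :
  (forall t : R, is_derive t (1:R) p (p1 t)) ->
  (forall t : R, is_derive t (1:R) p1 (p2 t)) ->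
  (forall t, a <= p2 t) ->
  a / 2 <= p 1 - p 0 - p1 0.
Proof.
move=> Hp Hp1 Ha.
pose k1 := fun t => p1 t - p1 0 - a * t.
have Dk1 (t : R) : is_derive t 1 k1 (p2 t - a).
  rewrite /k1.
  have -> : (fun t => p1 t - p1 0 - a * t) = p1 - cst (p1 0) - ( *%R a).
    by apply/funext => s.
  apply: is_derive_eq.
  by rewrite subr0 [_%:A]mulr1.
have k1ge t : 0 <= t -> 0 <= k1 t.
  move=> t0; have -> : 0 = k1 0 by rewrite /k1 mulr0 !subrr.
  apply: (mono_deriv Dk1) => // s _; rewrite subr_ge0; exact: Ha.
pose k := fun t => p t - p 0 - t * p1 0 - a / 2 * (t * t).
have Dk (t : R) : is_derive t 1 k (k1 t).
  rewrite /k.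
  have -> : (fun t => p t - p 0 - t * p1 0 - a / 2 * (t * t)) =
      p - cst (p 0) - ( *%R^~ (p1 0)) - (( *%R (a / 2)) \o (id * id)).
    by apply/funext => s.
  apply: is_derive_eq.
  change ((p1 t - 0 - (t * 0 + p1 0 * 1) - (a / 2) * (t * 1 + t * 1)) = k1 t).
  by rewrite /k1; field.
have := mono_deriv Dk (a:=0) (b:=1).
rewrite /k.
move=> H; have := H (fun t tt => k1ge t (ltW (proj1 (andP tt)))) ler01.
rewrite !mul0r !mul1r subrr !subr0 mulr0 subr0 mulr1. lra.
Qed.

Lemma taylor_ub (p p1 p2 : R -> R) (b : R) :
  (forall t : R, is_derive t (1:R) p (p1 t)) ->
  (forall t : R, is_derive t (1:R) p1 (p2 t)) ->
  (forall t, p2 t <= b) ->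
  p 1 - p 0 - p1 0 <= b / 2.
Proof.
move=> Hp Hp1 Hb.
have := @taylor_lb (- p) (fun t => - p1 t) (fun t => - p2 t) (- b).
have H1 : forall t : R, is_derive t (1:R) (- p) (- p1 t) by move=> t; exact: is_deriveN.
have H2 : forall t : R, is_derive t (1:R) (fun t => - p1 t) (- p2 t).
  move=> t; have -> : (fun t => - p1 t) = - p1 by [].
  exact: is_deriveN.
move=> /(_ H1 H2) H; have : (forall t, - b <= - p2 t) by move=> t; rewrite lerN2.
move=> /H H'; have : - b / 2 <= - p 1 - - p 0 - - p1 0 := H'. lra.
Qed.

End OneD.

Section Line.
Variables (R : realType) (V : normedModType R).

Lemma line_is_derive (f : V -> R) (a v : V) (t : R) :
  differentiable f (t *: v + a) ->
  is_derive t (1:R) (fun s => f (s *: v + a)) ('d f (t *: v + a) v).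
Proof.
move=> df.
have E : (fun h : R => h^-1 *: (((fun s => f (s *: v + a)) \o shift t) (h *: 1)
            - f (t *: v + a))) =
         (fun h : R => h^-1 *: ((f \o shift (t *: v + a)) (h *: v) - f (t *: v + a))).
  apply/funext => h /=; congr (_ *: (f _ - _)).
  by rewrite [h *: 1]mulr1 scalerDl addrA.
apply: DeriveDef.
  rewrite /derivable E; have := diff_derivable (v:=v) df; exact.
by rewrite /derive E -deriveE.
Qed.

End Line.


Section Convex.
Variables (R : realType) (d : nat).

Lemma dotv_diff (v : 'cV[R]_d) z : differentiable (fun u : 'cV[R]_d => dotv u v) z.
Proof.
rewrite (_ : (fun u => dotv u v) = \sum_(j < d) (fun u : 'cV[R]_d => u j 0 * v j 0)).
  apply: differentiable_sum => j.
  rewrite (_ : (fun u : 'cV[R]_d => u j 0 * v j 0) =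
     (fun u : 'cV[R]_d => u j 0) * cst (v j 0)) //.
  apply: differentiableM; first exact: differentiable_coord.
  exact: differentiable_cst.
by rewrite fct_sumE.
Qed.

Lemma dotv_linear (v : 'cV[R]_d) : linear (fun u : 'cV[R]_d => dotv u v).
Proof. by move=> a u w; rewrite dotvDl dotvZl. Qed.

Definition dotvL (v : 'cV[R]_d) : {linear 'cV[R]_d -> R} :=
  HB.pack (fun u : 'cV[R]_d => dotv u v) (GRing.isLinear.Build _ _ _ _ _ (dotv_linear v)).

Lemma dotv_d (v : 'cV[R]_d) z w : 'd (fun u : 'cV[R]_d => dotv u v) z w = dotv w v.
Proof.
have -> : (fun u : 'cV[R]_d => dotv u v) = dotvL v by [].
rewrite diff_lin //.
move=> y; exact: (differentiable_continuous (dotv_diff v y)).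
Qed.

Variables (f : 'cV[R]_d -> R) (g : 'cV[R]_d -> 'cV[R]_d) (H : 'cV[R]_d -> 'M[R]_d).
Variables (mu L : R).
Hypotheses (hg : is_gradient f g) (hH : is_jacobian g H)
  (hl : forall x, loewner_between mu L (H x)).

Lemma f2_diff (v : 'cV[R]_d) z :
  differentiable (fun u => dotv (g u) v) z /\
  'd (fun u => dotv (g u) v) z v = dotv (H z *m v) v.
Proof.
have -> : (fun u => dotv (g u) v) = (fun u => dotv u v) \o g by [].
have [dg eg] := hH z.
split; first by apply: differentiable_comp => //; exact: dotv_diff.
by rewrite diff_comp //= ?dotv_d ?eg //; exact: dotv_diff.
Qed.

Lemma bounds x y :
  mu * dotv (y - x) (y - x) / 2 <= f y - f x - dotv (g x) (y - x) /\
  f y - f x - dotv (g x) (y - x) <= L * dotv (y - x) (y - x) / 2.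
Proof.
set v := y - x.
pose p := fun s : R => f (s *: v + x).
pose p1 := fun s : R => dotv (g (s *: v + x)) v.
pose p2 := fun s : R => dotv (H (s *: v + x) *m v) v.
have D1 (t : R) : is_derive t (1:R) p (p1 t).
  have [df ef] := hg (t *: v + x).
  rewrite /p1 -ef; exact: line_is_derive.
have D2 (t : R) : is_derive t (1:R) p1 (p2 t).
  have [df ef] := f2_diff v (t *: v + x).
  rewrite /p2 -ef; exact: line_is_derive (fun u => dotv (g u) v) x v t df.
have E1 : p 1 = f y by rewrite /p scale1r /v subrK.
have E0 : p 0 = f x by rewrite /p scale0r add0r.
have E2 : p1 0 = dotv (g x) v by rewrite /p1 scale0r add0r.
split.
  have := @taylor_lb _ p p1 p2 (mu * dotv v v) D1 D2.
  rewrite E1 E0 E2; apply => t; rewrite /p2 dotvC.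
  by have [] := hl (t *: v + x) v.
have := @taylor_ub _ p p1 p2 (L * dotv v v) D1 D2.
rewrite E1 E0 E2; apply => t; rewrite /p2 dotvC.
by have [] := hl (t *: v + x) v.
Qed.

Hypothesis mu_gt0 : 0 < mu.
Hypothesis muL : mu <= L.

Lemma coco x y : dotv (g y - g x) (g y - g x) / (2 * L) <=
   f y - f x - dotv (g x) (y - x).
Proof.
have L0 : 0 < L by exact: lt_le_trans muL.
set w := g y - g x.
set z := y - L^-1 *: w.
have [lbxz _] := bounds x z.
have [_ ubyz] := bounds y z.
have Hzy : z - y = - (L^-1 *: w) by rewrite /z addrAC subrr add0r.
have Hzx : z - x = (y - x) - L^-1 *: w by rewrite /z addrAC.
have e1 : dotv (g y) (z - y) = - (L^-1 * dotv (g y) w) by rewrite Hzy dotvNr dotvZr.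
have e2 : dotv (z - y) (z - y) = L^-1 * (L^-1 * dotv w w).
  by rewrite Hzy dotvNr dotvNl opprK dotvZl dotvZr.
have e3 : dotv (g x) (z - x) = dotv (g x) (y - x) - L^-1 * dotv (g x) w.
  by rewrite Hzx [LHS]dotvBr dotvZr.
have E : dotv (g y) w - dotv (g x) w = dotv w w by rewrite -dotvBl.
have dge := dotv_ge0 (z - x).
rewrite e1 e2 in ubyz; rewrite e3 in lbxz.
have e4 : L * (L^-1 * (L^-1 * dotv w w)) / 2 = dotv w w / (2 * L).
  by field; rewrite gt_eqF.
have e5 : L^-1 * dotv (g y) w - L^-1 * dotv (g x) w = dotv w w / L.
  by rewrite -mulrBr E mulrC.
have e6 : dotv w w / L - dotv w w / (2 * L) = dotv w w / (2 * L).
  by field; rewrite gt_eqF.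
have : 0 <= mu * dotv (z - x) (z - x) / 2 by apply: divr_ge0 => //; apply: mulr_ge0 => //; exact: ltW.
lra.
Qed.

Lemma grad_lip x y : norm2 (g y - g x) <= L * norm2 (y - x).
Proof.
have L0 : 0 < L by exact: lt_le_trans muL.
have h1 := coco x y; have h2 := coco y x.
have E : dotv (g x - g y) (g x - g y) = dotv (g y - g x) (g y - g x).
  by rewrite -opprB dotvNl dotvNr opprK.
rewrite E in h2.
have e : f y - f x - dotv (g x) (y - x) + (f x - f y - dotv (g y) (x - y)) =
    dotv (g y - g x) (y - x).
  rewrite dotvBl -(opprB y x) dotvNr; lra.
have h3 : dotv (g y - g x) (g y - g x) / L <= norm2 (g y - g x) * norm2 (y - x).
  apply: le_trans (CS' _ _); rewrite -e.
  have -> : dotv (g y - g x) (g y - g x) / L = dotv (g y - g x) (g y - g x) / (2 * L)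
      + dotv (g y - g x) (g y - g x) / (2 * L) by field; rewrite gt_eqF.
  exact: lerD.
rewrite -norm2_sq in h3.
have := norm2_ge0 (g y - g x); have := norm2_ge0 (y - x).
set a := norm2 (g y - g x) in h3 *; set b := norm2 (y - x) in h3 *.
move=> b0 a0.
rewrite ler_pdivrMr // in h3.
have [->|an0] := eqVneq a 0; first by rewrite mulr_ge0 // ltW.
have ap : 0 < a by rewrite lt0r an0.
rewrite expr2 in h3; nra.
Qed.

End Convex.

Section Main.
Variables (R : realType) (n d : nat) (F : 'I_n -> 'cV[R]_d -> R)
  (gF : 'I_n -> 'cV[R]_d -> 'cV[R]_d) (HF : 'I_n -> 'cV[R]_d -> 'M[R]_d)
  (mu L LH : R).
Hypotheses (mu0 : 0 < mu) (muL : mu <= L)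
  (hg : forall i, is_gradient (F i) (gF i))
  (hH : forall i, is_jacobian (gF i) (HF i))
  (hl : forall i x, loewner_between mu L (HF i x))
  (hLH : forall i, mx_lipschitz LH (HF i)).

Local Notation fb := (fbeta F).
Local Notation gb := (grad_fbeta gF).
Local Notation Hb := (hess_fbeta HF).
Implicit Types (b : 'cV[R]_n) (x y : 'cV[R]_d).
Implicit Types (w z : 'cV[R]_d).

Lemma dotv_suml (I : finType) (G : I -> 'cV[R]_d) v :
  dotv (\sum_i G i) v = \sum_i dotv (G i) v.
Proof. by rewrite dotvC dotv_sumr; apply: eq_bigr => i _; rewrite dotvC. Qed.

Lemma Eb b x y : fb b y - fb b x - dotv (gb b x) (y - x) =
  \sum_i b i 0 * (F i y - F i x - dotv (gF i x) (y - x)).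
Proof.
rewrite /fbeta /grad_fbeta dotv_suml -!sumrB; apply: eq_bigr => i _.
by rewrite dotvZl; ring.
Qed.

Lemma sum_simplex b (c : R) : simplex b -> \sum_i b i 0 * c = c.
Proof. by move=> [_ sb]; rewrite -mulr_suml sb mul1r. Qed.

Lemma bounds_b b x y : simplex b ->
  mu * dotv (y - x) (y - x) / 2 <= fb b y - fb b x - dotv (gb b x) (y - x) /\
  fb b y - fb b x - dotv (gb b x) (y - x) <= L * dotv (y - x) (y - x) / 2.
Proof.
move=> sb; rewrite Eb; have [b0 _] := sb; split.
  rewrite -(sum_simplex (mu * dotv (y - x) (y - x) / 2) sb); apply: ler_sum => i _.
  by apply: ler_wpM2l => //; have [] := bounds (hg i) (hH i) (hl i) x y.
rewrite -(sum_simplex (L * dotv (y - x) (y - x) / 2) sb); apply: ler_sum => i _.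
by apply: ler_wpM2l => //; have [] := bounds (hg i) (hH i) (hl i) x y.
Qed.

Lemma entry_le_norm2 y (j : 'I_d) : `|y j 0| <= norm2 y.
Proof.
rewrite -sqrtr_sqr /norm2 ler_wsqrtr //.
rewrite /dotv (bigD1 j) //= -expr2 lerDl; apply: sumr_ge0 => k _.
by rewrite -expr2 sqr_ge0.
Qed.

Lemma mxnorm_le_norm2 y : `|y^T| <= norm2 y.
Proof.
rewrite [leLHS]/Num.Def.normr /= mx_normrE; apply: bigmax_le; first exact: norm2_ge0.
by move=> [i j] _ /=; rewrite mxE (ord1 i); exact: entry_le_norm2.
Qed.

Lemma trmx_norm_le (M : 'rV[R]_d) : `|M^T| <= `|M|.
Proof.
rewrite [leLHS]/Num.Def.normr [leRHS]/Num.Def.normr /= !mx_normrE.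
apply: bigmax_le.
  by rewrite -mx_normrE; exact: (normr_ge0 M).
move=> [i j] _ /=; rewrite mxE.
by apply/bigmax_geP; right; exists (j, i).
Qed.

Lemma trmx_cont : continuous (fun r : 'rV[R]_d => r^T).
Proof.
move=> u A /nbhs_ballP[e /= e0 eA].
apply/nbhs_ballP; exists e => //= v [_ uv]; apply: eA; split => // i j.
by apply: (le_lt_trans _ (uv j i)); rewrite !mxE.
Qed.

Lemma fb_diff b x : differentiable (fb b) x.
Proof.
have -> : fb b = \sum_(i < n) (fun y => b i 0 * F i y).
  by rewrite fct_sumE; apply/funext => y.
apply: differentiable_sum => i.
have -> : (fun y => b i 0 * F i y) = cst (b i 0) * F i by [].
apply: differentiableM; first exact: differentiable_cst.
by have [] := hg i x.
Qed.

Lemma exists_min b : simplex b -> exists x, forall y, fb b x <= fb b y.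
Proof.
move=> sb.
set G := norm2 (gb b 0).
set M := 2 * G / mu + 1.
have M0 : 0 < M.
  rewrite /M; apply: ltr_pwDr => //; apply: divr_ge0; last exact: ltW.
  by apply: mulr_ge0 => //; exact: norm2_ge0.
pose fr := fun r : 'rV[R]_d => fb b r^T.
pose A := closed_ball (0 : 'rV[R]_d) M.
have A0 : A !=set0 by exists 0; exact: closed_ballxx.
have Ab : bounded_set A.
  exists M; split; first exact: num_real.
  move=> N MN x; rewrite /A closed_ballE // /closed_ball_ /= sub0r normrN => h.
  exact: le_trans h (ltW MN).
have Ac : compact A by apply: bounded_closed_compact => //; exact: closed_ball_closed.
have cf : {within A, continuous fr}.
  apply: continuous_subspaceT => r.
  apply: continuous_comp; first exact: trmx_cont.
  exact: differentiable_continuous (fb_diff b _).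
have [c cA cmin] := EVT_min_rV A0 Ac cf.
exists c^T => y.
have [yA|ynA] := pselect (A y^T).
  by have := cmin y^T; rewrite inE => /(_ yA); rewrite /fr trmxK.
have c0 : fb b c^T <= fb b 0.
  have h0 : (0 : 'rV[R]_d) \in A by rewrite inE; exact: closed_ballxx.
  by have := cmin 0 h0; rewrite /fr trmx0.
apply: le_trans c0 _.
have N : M < norm2 y.
  rewrite ltNge; apply/negP => h; apply: ynA.
  rewrite /A closed_ballE // /closed_ball_ /= sub0r normrN.
  exact: le_trans (mxnorm_le_norm2 y) h.
have [lb _] := bounds_b 0 y sb.
rewrite subr0 -/G in lb.
have cs : - dotv (gb b 0) y <= G * norm2 y.
  by have := CS (gb b 0) y; rewrite ler_norml => /andP[h _]; rewrite lerNl.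
rewrite -norm2_sq in lb.
have G0 : 0 <= G := norm2_ge0 _.
have NC' : 2 * G < mu * norm2 y.
  have : 2 * G / mu < norm2 y by apply: lt_trans N; rewrite /M ltrDl.
  by rewrite -(ltr_pM2r mu0) divfK ?gt_eqF // [norm2 y * mu]mulrC.
set Nn := norm2 y in lb cs NC' *.
have Np : 0 < Nn by apply: lt_trans N.
clear -lb cs NC' G0 Np mu0.
nra.
Qed.

Lemma xstar_min b : simplex b -> forall y, fb b (xstar F b) <= fb b y.
Proof. by move=> sb; exact: (xgetPex 0 (exists_min sb)). Qed.

Lemma grad0 b : simplex b -> gb b (xstar F b) = 0.
Proof.
move=> sb; set x := xstar F b; set g := gb b x.
have L0 : 0 < L by exact: lt_le_trans muL.
have [_ ub] := bounds_b x (x - L^-1 *: g) sb.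
have m := xstar_min sb (x - L^-1 *: g).
have e1 : x - L^-1 *: g - x = - (L^-1 *: g) by rewrite addrAC subrr add0r.
rewrite e1 dotvNr dotvNl dotvNr opprK !dotvZr dotvZl in ub.
have e : L * (L^-1 * (L^-1 * dotv g g)) / 2 = L^-1 * dotv g g / 2.
  by field; rewrite gt_eqF.
rewrite !opprK -/g e in ub.
have gg : dotv g g <= 0.
  have : L^-1 * dotv g g / 2 <= 0 by rewrite -/x in m; lra.
  have p : 0 < L^-1 by rewrite invr_gt0.
  move=> h; nra.
by apply: dotv_eq0; apply/eqP; rewrite eq_le gg dotv_ge0.
Qed.

Lemma xstar_uniq b y : simplex b -> fb b y <= fb b (xstar F b) -> y = xstar F b.
Proof.
move=> sb le; have [lb _] := bounds_b (xstar F b) y sb.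
rewrite grad0 // dotv0l subr0 in lb.
have : mu * dotv (y - xstar F b) (y - xstar F b) / 2 <= 0 by lra.
move=> h; have H : dotv (y - xstar F b) (y - xstar F b) <= 0 by move: h; rewrite -mulrA pmulr_rle0 // pmulr_lle0.
apply/eqP; rewrite -subr_eq0; apply/eqP; apply: dotv_eq0.
by apply/eqP; rewrite eq_le H dotv_ge0.
Qed.

Lemma dist_xstar b x : simplex b ->
  norm2 (x - xstar F b) <= norm2 (gb b x) / mu.
Proof.
move=> sb; set xb := xstar F b.
have [lb1 _] := bounds_b xb x sb.
have [lb2 _] := bounds_b x xb sb.
rewrite grad0 // dotv0l subr0 in lb1.
have e : dotv (xb - x) (xb - x) = dotv (x - xb) (x - xb).
  by rewrite -opprB dotvNl dotvNr opprK.
have e2 : dotv (gb b x) (xb - x) = - dotv (gb b x) (x - xb).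
  by rewrite -opprB dotvNr.
rewrite e e2 in lb2.
have key : mu * dotv (x - xb) (x - xb) <= norm2 (gb b x) * norm2 (x - xb).
  apply: le_trans (CS' _ _); lra.
rewrite -norm2_sq expr2 mulrA in key.
rewrite ler_pdivlMr //.
have := norm2_ge0 (x - xb); have := norm2_ge0 (gb b x).
set a := norm2 (x - xb) in key *; set c := norm2 (gb b x) in key *.
move=> c0 a0.
have [->|an0] := eqVneq a 0; first by rewrite mul0r.
have ap : 0 < a by rewrite lt0r an0.
nra.
Qed.

Lemma pareto_xstar b : simplex b -> pareto_set F (xstar F b).
Proof.
move=> sb [y [Hle [j Hj]]].
have le : fb b y <= fb b (xstar F b).
  apply: ler_sum => i _; apply: ler_wpM2l => //; by case: sb.
have ey := xstar_uniq sb le.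
by rewrite ey ltxx in Hj.
Qed.

Lemma pareto_bound (i0 : 'I_n) :
  exists C, 0 <= C /\ forall x, pareto_set F x -> norm2 x <= C.
Proof.
set C := \sum_i 2 * norm2 (gF i 0) / mu + 1.
have S0 : 0 <= \sum_i 2 * norm2 (gF i 0) / mu.
  by apply: sumr_ge0 => i _; apply: divr_ge0; [apply: mulr_ge0 => //; exact: norm2_ge0|exact: ltW].
exists C; split; first by rewrite /C; apply: addr_ge0.
move=> x Px; rewrite leNgt; apply/negP => Cx; apply: Px.
set y := 2^-1 *: x.
have Hlt i : F i y < F i x.
  have [lb1 _] := bounds (hg i) (hH i) (hl i) y x.
  have [lb2 _] := bounds (hg i) (hH i) (hl i) y 0.
  have [lb3 _] := bounds (hg i) (hH i) (hl i) 0 x.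
  have exy : x - y = y by rewrite /y -{1}(scale1r x) -scalerBl; congr (_ *: _); field.
  have e0y : 0 - y = - y by rewrite sub0r.
  rewrite exy in lb1; rewrite e0y dotvNl dotvNr opprK dotvNr in lb2.
  rewrite subr0 in lb3.
  have eyy : dotv y y = dotv x x / 4.
    by rewrite /y dotvZl dotvZr mulrA; field.
  rewrite eyy in lb1 lb2.
  set G := norm2 (gF i 0).
  set N := norm2 x.
  have cs : - dotv (gF i 0) x <= G * N.
    by have := CS (gF i 0) x; rewrite ler_norml => /andP[h _]; rewrite lerNl.
  have NN : dotv x x = N ^+ 2 by rewrite norm2_sq.
  rewrite NN in lb1 lb2 lb3.
  have Gi : 2 * G / mu <= \sum_j 2 * norm2 (gF j 0) / mu.
    rewrite (bigD1 i) //= lerDl; apply: sumr_ge0 => j _.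
    by apply: divr_ge0; [apply: mulr_ge0 => //; exact: norm2_ge0|exact: ltW].
  have NC : 2 * G / mu < N by apply: le_lt_trans Cx; apply: le_trans Gi _; rewrite /C lerDl.
  have NC' : 2 * G < mu * N.
    by move: NC; rewrite -(ltr_pM2r mu0) divfK ?gt_eqF // [N * mu]mulrC.
  have G0 : 0 <= G := norm2_ge0 _.
  have N0 : 0 < N by apply: le_lt_trans NC; apply: divr_ge0 => //; [apply: mulr_ge0|exact: ltW].
  clear -lb1 lb2 lb3 cs NC' G0 N0 mu0.
  nra.
exists y; split; first by move=> i; apply: ltW.
by exists i0.
Qed.

Lemma diam_ub (i0 : 'I_n) x y : pareto_set F x -> pareto_set F y ->
  norm2 (x - y) <= l2_diam (pareto_set F).
Proof.
move=> Px Py; have [C [C0 HC]] := pareto_bound i0.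
apply: ub_le_sup; last by exists x => //; exists y.
exists (C + C) => z [a Pa [c Pc <-]].
apply: le_trans (norm2D _ _) _; rewrite norm2N.
by apply: lerD; [exact: HC|exact: HC].
Qed.

Definition ev (i : 'I_n) : 'cV[R]_n := \col_k ((k == i)%:R).

Lemma ev_simplex i : simplex (ev i).
Proof.
split; first by move=> k; rewrite mxE ler0n.
rewrite (bigD1 i) //= mxE eqxx big1 ?addr0 // => k kn.
by rewrite mxE (negbTE kn).
Qed.

Lemma fb_ev i x : fb (ev i) x = F i x.
Proof.
rewrite /fbeta (bigD1 i) //= mxE eqxx mul1r big1 ?addr0 // => k kn.
by rewrite mxE (negbTE kn) mul0r.
Qed.

Lemma gb_ev i x : gb (ev i) x = gF i x.
Proof.
rewrite /grad_fbeta (bigD1 i) //= mxE eqxx scale1r big1 ?addr0 // => k kn.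
by rewrite mxE (negbTE kn) scale0r.
Qed.

Lemma gF_bound b i : simplex b ->
  norm2 (gF i (xstar F b)) <= L * l2_diam (pareto_set F).
Proof.
move=> sb; set m := xstar F (ev i).
have gm : gF i m = 0 by rewrite -gb_ev grad0 //; exact: ev_simplex.
have := grad_lip (hg i) (hH i) (hl i) mu0 muL m (xstar F b).
rewrite gm subr0 => H; apply: le_trans H _.
apply: ler_wpM2l; first exact: ltW (lt_le_trans mu0 muL).
apply: (diam_ub i); [exact: pareto_xstar|exact: pareto_xstar (ev_simplex i)].
Qed.

Lemma hess_mul b y w : Hb b y *m w = \sum_i b i 0 *: (HF i y *m w).
Proof. by rewrite /hess_fbeta mulmx_suml; apply: eq_bigr => i _; rewrite -scalemxAl. Qed.

Lemma hess_quad b y w : simplex b -> mu * dotv w w <= dotv w (Hb b y *m w).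
Proof.
move=> sb; rewrite hess_mul dotv_sumr -(sum_simplex (mu * dotv w w) sb).
apply: ler_sum => i _; rewrite dotvZr; apply: ler_wpM2l; first by case: sb.
by have [] := hl i y w.
Qed.

Lemma hess_unit b y : simplex b -> Hb b y \in unitmx.
Proof.
move=> sb; rewrite unitmxE unitfE -det_tr; apply/negP => /det0P [r rn0 hr].
have Hw : Hb b y *m r^T = 0 by rewrite -[Hb b y]trmxK -trmx_mul hr trmx0.
have := hess_quad y (r^T) sb; rewrite Hw dotv0r => h.
have : dotv r^T r^T <= 0 by move: h; rewrite pmulr_rle0.
move=> h2; have w0 : r^T = 0 by apply: dotv_eq0; apply/eqP; rewrite eq_le h2 dotv_ge0.
by move/negP: rn0; apply; rewrite -[r]trmxK w0 trmx0.
Qed.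

Lemma inv_bound b y w : simplex b ->
  norm2 (invmx (Hb b y) *m w) <= norm2 w / mu.
Proof.
move=> sb; set z := invmx (Hb b y) *m w.
have Hz : Hb b y *m z = w by rewrite /z mulKVmx // hess_unit.
have key : mu * dotv z z <= norm2 z * norm2 w.
  by apply: le_trans (CS' z w); have := hess_quad y z sb; rewrite Hz.
rewrite -norm2_sq expr2 mulrA in key.
rewrite ler_pdivlMr //.
have := norm2_ge0 z; have := norm2_ge0 w.
set a := norm2 z in key *; set c := norm2 w in key *.
move=> c0 a0.
have [->|an0] := eqVneq a 0; first by rewrite mul0r.
have ap : 0 < a by rewrite lt0r an0.
nra.
Qed.

Lemma hess_lip b x y z : simplex b ->
  norm2 ((Hb b x - Hb b y) *m z) <= LH * norm2 (x - y) * norm2 z.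
Proof.
move=> sb.
have -> : (Hb b x - Hb b y) *m z = \sum_i b i 0 *: ((HF i x - HF i y) *m z).
  rewrite mulmxBl !hess_mul -sumrB; apply: eq_bigr => i _.
  by rewrite mulmxBl scalerBr.
apply: le_trans (norm2_sum _ _) _.
rewrite -(sum_simplex (LH * norm2 (x - y) * norm2 z) sb).
apply: ler_sum => i _; rewrite norm2Z ger0_norm; last by case: sb.
apply: ler_wpM2l; first by case: sb.
exact: hLH.
Qed.

Definition Pv b (v : 'cV[R]_n) y := \sum_i v i 0 *: (invmx (Hb b y) *m gF i y).

Lemma hat_mul y b (v : 'cV[R]_n) :
  hat_dxstar gF HF y b *m v = - Pv b v y.
Proof.
rewrite /hat_dxstar mulNmx -mulmxA; congr (- _).
have -> : (jacF gF y)^T *m v = \sum_i v i 0 *: gF i y.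
  apply/matrixP => j k; rewrite !mxE summxE; apply: eq_bigr => i _.
  by rewrite !mxE (ord1 k) mulrC.
by rewrite mulmx_sumr; apply: eq_bigr => i _; rewrite scalemxAr.
Qed.

Lemma quad_form (g : 'cV[R]_d) (M : 'M[R]_(d, n)) (v : 'cV[R]_n) :
  (g^T *m M *m v) 0 0 = dotv g (M *m v).
Proof. by rewrite -mulmxA mxE /dotv; apply: eq_bigr => j _; rewrite mxE. Qed.

Lemma sum_bound (v : 'cV[R]_n) (W : 'I_n -> 'cV[R]_d) B :
  (forall i, norm2 (W i) <= B) -> norm2 (\sum_i v i 0 *: W i) <= norm1 v * B.
Proof.
move=> HW; apply: le_trans (norm2_sum _ _) _.
rewrite /norm1 mulr_suml; apply: ler_sum => i _; rewrite norm2Z.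
by apply: ler_wpM2l => //; exact: normr_ge0.
Qed.

Lemma norm1_ge0 (v : 'cV[R]_n) : 0 <= norm1 v.
Proof. by apply: sumr_ge0 => i _; exact: normr_ge0. Qed.

Local Notation Rd := (l2_diam (pareto_set F)).

Lemma c_bound b i : simplex b ->
  norm2 (invmx (Hb b (xstar F b)) *m gF i (xstar F b)) <= L * Rd / mu.
Proof.
move=> sb; apply: le_trans (inv_bound _ _ sb) _.
by rewrite ler_pM2r ?invr_gt0 //; exact: gF_bound.
Qed.

Lemma c_diff b i x : simplex b -> 0 <= LH ->
  norm2 (invmx (Hb b x) *m gF i x - invmx (Hb b (xstar F b)) *m gF i (xstar F b))
  <= (L + L * LH * Rd / mu) / mu * norm2 (x - xstar F b).
Proof.
move=> sb LH0; set xb := xstar F b.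
set Hx := Hb b x; set Hy := Hb b xb.
set z := invmx Hy *m gF i xb.
have ux : Hx \in unitmx by exact: hess_unit.
have uy : Hy \in unitmx by exact: hess_unit.
have -> : invmx Hx *m gF i x - z =
    invmx Hx *m (gF i x - gF i xb) + invmx Hx *m ((Hy - Hx) *m z).
  rewrite -mulmxDr mulmxBl /z mulmxA mulmxV // mul1mx addrA subrK.
  by rewrite mulmxBr mulmxA mulVmx // mul1mx.
apply: le_trans (norm2D _ _) _.
have L0 : 0 <= L by exact: ltW (lt_le_trans mu0 muL).
have h1 : norm2 (invmx Hx *m (gF i x - gF i xb)) <= L * norm2 (x - xb) / mu.
  apply: le_trans (inv_bound _ _ sb) _.
  rewrite ler_pM2r ?invr_gt0 //.
  have := grad_lip (hg i) (hH i) (hl i) mu0 muL xb x; exact.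
have h2 : norm2 (invmx Hx *m ((Hy - Hx) *m z)) <=
    LH * norm2 (x - xb) * (L * Rd / mu) / mu.
  apply: le_trans (inv_bound _ _ sb) _.
  rewrite ler_pM2r ?invr_gt0 //.
  apply: le_trans (hess_lip _ _ _ sb) _.
  rewrite norm2B; apply: ler_wpM2l; first by apply: mulr_ge0 => //; exact: norm2_ge0.
  exact: c_bound.
apply: le_trans (lerD h1 h2) _.
by rewrite le_eqVlt; apply/orP; left; apply/eqP; field; rewrite gt_eqF.
Qed.

Lemma core (g0 : 'cV[R]_d -> 'cV[R]_d) (L0 eps0 eps : R) xh bh :
  vec_lipschitz L0 g0 -> simplex bh -> norm2 (gb bh xh) <= eps ->
  (exists (x : 'cV[R]_d) (alpha : R), 0 < alpha < 1 /\
     (forall b', simplex b' ->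
        - ((g0 x)^T *m hat_dxstar gF HF x bh *m (b' - bh)) 0 0
          <= alpha * eps0 * norm1 (b' - bh)) /\
     err_grad_f0 F gF mu L LH L0 g0 x bh <= (1 - alpha) * eps0) ->
  pref_stationary F gF HF g0 eps0 eps xh bh.
Proof.
move=> hL0 sb heps [x [al [/andP[al0 al1] [H1 Herr]]]].
split => // b' sb'.
have [i0 _] : exists i : 'I_n, True.
  case: (pickP (fun _ : 'I_n => true)) => [i _|H]; first by exists i.
  have : \sum_(i < n) bh i 0 = 0 by apply: big1 => i; have := H i.
  by case: sb => _ ->; move/eqP; rewrite oner_eq0.
set v := b' - bh; set xb := xstar F bh.
have := H1 b' sb'; rewrite /dxstar -/xb !quad_form !hat_mul !dotvNr !opprK -/v.
move=> H.
have n1 := norm1_ge0 v.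
have L0p : 0 < L by exact: lt_le_trans mu0 muL.
have Pxb : norm2 (Pv bh v xb) <= norm1 v * (L * Rd / mu).
  by apply: sum_bound => i; exact: c_bound.
have Rd0 : 0 <= Rd.
  have := diam_ub i0 (pareto_xstar sb) (pareto_xstar sb).
  by rewrite subrr norm2_0.
have al1' : 0 < 1 - al by rewrite subr_gt0.
have [RdE|Rdn0] := eqVneq Rd 0.
  have P0 : Pv bh v xb = 0.
    apply: norm2_eq0; apply/eqP; rewrite eq_le norm2_ge0 andbT.
    by move: Pxb; rewrite RdE mulr0 mul0r mulr0.
  have e0 : err_grad_f0 F gF mu L LH L0 g0 x bh = 0.
    rewrite /err_grad_f0 /= RdE !(mulr0, mul0r, invr0, addr0, add0r).
    by [].
  rewrite e0 in Herr.
  have eps00 : 0 <= eps0 by move: Herr; rewrite pmulr_rge0.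
  by rewrite P0 dotv0r mulr_ge0.
have Rdp : 0 < Rd by rewrite lt0r Rdn0.
have [exb|xnb] := eqVneq x xb.
  rewrite exb in Herr H.
  have e0 : err_grad_f0 F gF mu L LH L0 g0 xb bh = 0.
    by rewrite /err_grad_f0 /= /xb grad0 // norm2_0 mulr0.
  rewrite e0 in Herr.
  have eps00 : 0 <= eps0 by move: Herr; rewrite pmulr_rge0.
  apply: le_trans H _.
  by rewrite -mulrA ler_piMl // ?mulr_ge0 //; exact: ltW.
have dp : 0 < norm2 (x - xb).
  rewrite lt0r norm2_ge0 andbT; apply/eqP => /norm2_eq0 /eqP.
  by rewrite subr_eq0 (negbTE xnb).
have L00 : 0 <= L0.
  have := hL0 x xb; have := norm2_ge0 (g0 x - g0 xb) => h1 h2.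
  by have := le_trans h1 h2; rewrite pmulr_lge0.
have LH0 : 0 <= LH.
  have := hLH i0 x xb (x - xb).
  have := norm2_ge0 ((HF i0 x - HF i0 xb) *m (x - xb)) => h1 h2.
  by have := le_trans h1 h2; rewrite -mulrA pmulr_lge0 // mulr_gt0.
set del := norm2 (x - xb).
set N := norm2 (gb bh x).
set G := norm2 (g0 x).
set K := (L + L * LH * Rd / mu) / mu.
have K0 : 0 <= K.
  by apply: divr_ge0; [apply: addr_ge0; [exact: ltW|apply: divr_ge0; [apply: mulr_ge0; [apply: mulr_ge0; [exact: ltW|]|]|exact: ltW]]|exact: ltW].
have dN : del <= N / mu by exact: dist_xstar.
have eE : err_grad_f0 F gF mu L LH L0 g0 x bh = (K * G + L0 * (L / mu * Rd)) * N / mu.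
  rewrite /err_grad_f0 /= -/N -/G /K; field.
  by rewrite !gt_eqF // ?mulr_gt0 // divr_gt0.
have dec : dotv (g0 xb) (Pv bh v xb) = dotv (g0 x) (Pv bh v x)
    + dotv (g0 xb - g0 x) (Pv bh v xb) + dotv (g0 x) (Pv bh v xb - Pv bh v x).
  rewrite dotvBl dotvBr; ring.
have t1 : dotv (g0 xb - g0 x) (Pv bh v xb) <= L0 * del * (norm1 v * (L * Rd / mu)).
  apply: le_trans (CS' _ _) _; apply: ler_pM => //; try exact: norm2_ge0.
  by rewrite norm2B; exact: hL0.
have t2 : dotv (g0 x) (Pv bh v xb - Pv bh v x) <= G * (norm1 v * (K * del)).
  apply: le_trans (CS' _ _) _; apply: ler_wpM2l; first exact: norm2_ge0.
  have -> : Pv bh v xb - Pv bh v x =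
      \sum_i v i 0 *: (invmx (Hb bh xb) *m gF i xb - invmx (Hb bh x) *m gF i x).
    by rewrite /Pv -sumrB; apply: eq_bigr => i _; rewrite scalerBr.
  apply: sum_bound => i; rewrite norm2B; exact: c_diff.
have fin : L0 * del * (norm1 v * (L * Rd / mu)) + G * (norm1 v * (K * del))
    <= err_grad_f0 F gF mu L LH L0 g0 x bh * norm1 v.
  rewrite eE.
  have -> : L0 * del * (norm1 v * (L * Rd / mu)) + G * (norm1 v * (K * del)) =
      (norm1 v * (K * G + L0 * (L / mu * Rd))) * del by ring.
  have -> : (K * G + L0 * (L / mu * Rd)) * N / mu * norm1 v =
      (norm1 v * (K * G + L0 * (L / mu * Rd))) * (N / mu) by ring.
  apply: ler_wpM2l => //; apply: mulr_ge0 => //.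
  apply: addr_ge0; first by apply: mulr_ge0 => //; exact: norm2_ge0.
  apply: mulr_ge0 => //; apply: mulr_ge0 => //; apply: divr_ge0; exact: ltW.
have fin2 : err_grad_f0 F gF mu L LH L0 g0 x bh * norm1 v <= (1 - al) * eps0 * norm1 v.
  exact: ler_wpM2r.
rewrite dec.
have e3 : eps0 * norm1 v = al * eps0 * norm1 v + (1 - al) * eps0 * norm1 v by ring.
rewrite e3.
lra.
Qed.

End Main.

Unset Implicit Arguments.

Theorem lemma5 (R : realType) (n d : nat)
  (F : 'I_n -> 'cV[R]_d -> R) (gF : 'I_n -> 'cV[R]_d -> 'cV[R]_d)
  (HF : 'I_n -> 'cV[R]_d -> 'M[R]_d)
  (f0 : 'cV[R]_d -> R) (g0 : 'cV[R]_d -> 'cV[R]_d)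
  (mu L LH L0 eps0 eps : R) :
  (* Assumption A1 *)
  0 < mu -> mu <= L ->
  (forall i, is_gradient (F i) (gF i)) ->
  (forall i, is_jacobian (gF i) (HF i)) ->
  (forall i x, loewner_between mu L (HF i x)) ->
  (* Assumption A2 *)
  (forall i, mx_lipschitz LH (HF i)) ->
  (* Assumption A3 *)
  is_gradient f0 g0 -> vec_lipschitz L0 g0 ->
  forall (xh : 'cV[R]_d) (bh : 'cV[R]_n), simplex bh ->
  norm2 (grad_fbeta gF bh xh) <= eps ->
  (exists (x : 'cV[R]_d) (alpha : R), 0 < alpha < 1 /\
     (forall b', simplex b' ->
        - ((g0 x)^T *m hat_dxstar gF HF x bh *m (b' - bh)) 0 0
          <= alpha * eps0 * norm1 (b' - bh)) /\
     err_grad_f0 F gF mu L LH L0 g0 x bh <= (1 - alpha) * eps0) ->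
  pref_stationary F gF HF g0 eps0 eps xh bh.

Proof.
move=> mu0 muL hg hH hl hLH _ hL0 xh bh sb heps hx.
exact: (core mu0 muL hg hH hl hLH hL0 sb heps hx).
Qed.
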